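(* Let $n\ge1$ and let $T\in\mathcal{L}(\mathcal{H})$ be $n$-hypo-EP. If $T$ satisfies one of the following: (i) $TT^\dagger$ commutes with $T^n+T^\dagger$; (ii) $TT^\dagger$ commutes with $T^n+T^*$; (iii) $T$ commutes with $T^nT^\dagger$; then $T$ is $n$-EP.
   Context: $\mathcal{H}$ is a Hilbert space, $\mathcal{L}(\mathcal{H})$ the bounded operators on it; $R(\cdot)$ denotes range. For $T$ with closed range, $T^\dagger$ is its Moore–Penrose inverse (unique solution of $TT^\dagger T=T$, $T^\dagger TT^\dagger=T^\dagger$, $(T^\dagger T)^*=T^\dagger T$, $(TT^\dagger)^*=TT^\dagger$). $T$ is $n$-hypo-EP if it has closed range and $R(T^n)\subset R(T^* )$. $T$ is $n$-EP if it has closed range and $T^nT^\dagger=T^\dagger T^n$. *)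

(* Defs.v *)
From HB Require Import structures.
From mathcomp Require Import all_boot all_order all_algebra.
From mathcomp Require Import all_classical all_reals all_analysis.
From mathcomp Require Import complex.
Set Implicit Arguments. Unset Strict Implicit. Unset Printing Implicit Defensive.
Import Order.TTheory GRing.Theory Num.Theory.
Import numFieldNormedType.Exports.
Local Open Scope ring_scope.
Local Open Scope classical_set_scope.

(* A complex Hilbert space: a complete normed space H over C = R[i] whose
   norm is induced by the inner product [inner] (linear in the first
   argument, conjugate symmetric, positive definite). *)
Definition is_inner_product (R : realType) (H : completeNormedModType R[i])
  (inner : H -> H -> R[i]) : Prop :=
  [/\ (forall (a : R[i]) (x y z : H), inner (a *: x + y) z = a * inner x z + inner y z),
      (forall x y : H, inner y x = (inner x y)^*),
      (forall x : H, 0 <= inner x x),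
      (forall x : H, inner x x = 0 -> x = 0)
    & (forall x : H, `|x| ^+ 2 = inner x x)].

Definition bounded_op (R : realType) (H : completeNormedModType R[i]) (T : H -> H) : Prop :=
  (forall (a : R[i]) (x y : H), T (a *: x + y) = a *: T x + T y) /\ continuous T.

Definition is_adjoint (R : realType) (H : completeNormedModType R[i])
  (inner : H -> H -> R[i]) (T S : H -> H) : Prop :=
  forall x y : H, inner (T x) y = inner x (S y).

Definition closed_range (R : realType) (H : completeNormedModType R[i]) (T : H -> H) : Prop :=
  closed (range T).

Definition is_MP_inverse (R : realType) (H : completeNormedModType R[i])
  (inner : H -> H -> R[i]) (T S : H -> H) : Prop :=
  [/\ bounded_op S,
      T \o S \o T = T,
      S \o T \o S = S,
      is_adjoint inner (S \o T) (S \o T)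
    & is_adjoint inner (T \o S) (T \o S)].

Definition opow (R : realType) (H : completeNormedModType R[i]) (n : nat) (T : H -> H) : H -> H :=
  iter n T.

Definition opadd (R : realType) (H : completeNormedModType R[i]) (A B : H -> H) : H -> H :=
  fun x => A x + B x.

Definition n_hypo_EP (R : realType) (H : completeNormedModType R[i])
  (inner : H -> H -> R[i]) (n : nat) (T : H -> H) : Prop :=
  closed_range T /\
  forall Ts, is_adjoint inner T Ts -> range (opow n T) `<=` range Ts.

Definition n_EP (R : realType) (H : completeNormedModType R[i])
  (inner : H -> H -> R[i]) (n : nat) (T : H -> H) : Prop :=
  closed_range T /\
  forall Td, is_MP_inverse inner T Td -> opow n T \o Td = Td \o opow n T.

(* Main.v *)
Require Import Defs.
From HB Require Import structures.
From mathcomp Require Import all_boot all_order all_algebra.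
From mathcomp Require Import all_classical all_reals all_analysis.
From mathcomp Require Import complex.
Import numFieldNormedType.Exports.
Import GRing.Theory.
Local Open Scope ring_scope.

Section Aux.
Variables (R : realType) (H : completeNormedModType R[i])
  (inner : H -> H -> R[i]) (hH : is_inner_product inner).

Lemma inner_ext1 (a b : H) : (forall v, inner a v = inner b v) -> a = b.
Proof.
move=> E; have [lin _ _ def _] := hH.
apply/subr0_eq/def.
have -> : a - b = (-1) *: b + a by rewrite scaleN1r addrC.
by rewrite lin E mulN1r addNr.
Qed.

Lemma inner_ext2 (a b : H) : (forall v, inner v a = inner v b) -> a = b.
Proof.
move=> E; apply: inner_ext1 => v; have [_ cs _ _ _] := hH.
by rewrite (cs v a) (cs v b) E.
Qed.

Lemma MP_unique (T X Y : H -> H) :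
  is_MP_inverse inner T X -> is_MP_inverse inner T Y -> X = Y.
Proof.
move=> [_ hX1 hX2 hX3 hX4] [_ hY1 hY2 hY3 hY4].
have e1 : forall u, T (X (T u)) = T u by move=> u; exact: (congr1 (fun f => f u) hX1).
have e2 : forall u, X (T (X u)) = X u by move=> u; exact: (congr1 (fun f => f u) hX2).
have f1 : forall u, T (Y (T u)) = T u by move=> u; exact: (congr1 (fun f => f u) hY1).
have f2 : forall u, Y (T (Y u)) = Y u by move=> u; exact: (congr1 (fun f => f u) hY2).
have AXY : forall u, T (X u) = T (Y u).
  move=> u; apply: inner_ext1 => v.
  rewrite -[T (X u)]f1.
  have := hY4 (T (X u)) v => /= ->.
  have := hX4 u (T (Y v)) => /= ->.
  rewrite e1; have := hY4 u v => /= ->; done.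
have XAY : forall u, X (T u) = Y (T u).
  move=> u; apply: inner_ext1 => v.
  have h : X (T u) = X (T (Y (T u))) by rewrite f1.
  rewrite h; have := hX3 (Y (T u)) v => /= ->.
  have := hY3 u (X (T v)) => /= ->.
  have -> : Y (T (X (T v))) = Y (T v) by rewrite e1.
  have := hY3 u v => /= ->; done.
apply: funext => u.
by rewrite -e2 AXY XAY f2.
Qed.
End Aux.

Theorem mainTheorem16 (R : realType) (H : completeNormedModType R[i])
  (inner : H -> H -> R[i]) (hH : is_inner_product inner)
  (n : nat) (hn : (1 <= n)%N) (T Ts Td : H -> H)
  (hT : bounded_op T) (hTs : is_adjoint inner T Ts) (hTd : is_MP_inverse inner T Td)
  (hEP : n_hypo_EP inner n T) :
  ((T \o Td) \o opadd (opow n T) Td = opadd (opow n T) Td \o (T \o Td)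
   \/ (T \o Td) \o opadd (opow n T) Ts = opadd (opow n T) Ts \o (T \o Td)
   \/ T \o (opow n T \o Td) = (opow n T \o Td) \o T) ->
  n_EP inner n T.
Proof.
move=> hyp; split; first by case: hEP.
move=> Td' hTd'; rewrite -(@MP_unique _ _ _ hH _ _ _ hTd hTd').
have [_ hX1 hX2 hX3 hX4] := hTd.
have e1 : forall u, T (Td (T u)) = T u by move=> u; exact: (congr1 (fun f => f u) hX1).
have e2 : forall u, Td (T (Td u)) = Td u by move=> u; exact: (congr1 (fun f => f u) hX2).
have cs : forall x y, inner y x = (inner x y)^* by case: hH.
have TsQ : forall y, Ts (T (Td y)) = Ts y.
  move=> y; apply: (@inner_ext2 _ _ _ hH) => x.
  rewrite -hTs -hTs; have := hX4 (T x) y => /= <-; by rewrite e1.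
have PTs : forall y, Td (T (Ts y)) = Ts y.
  move=> y; apply: (@inner_ext2 _ _ _ hH) => x.
  have := hX3 x (Ts y) => /= <-; by rewrite -hTs -hTs e1.
have PTn : forall x, Td (T (opow n T x)) = opow n T x.
  move=> x; have [_ h] := hEP.
  have [y _ <-] : range Ts (opow n T x) by apply: (h Ts hTs); exists x.
  by rewrite PTs.
clear hEP; case: n hn PTn hyp => // m _ PTn hyp.
have TnP : forall x, opow m.+1 T (Td (T x)) = opow m.+1 T x.
  by move=> x; rewrite /opow !iterSr e1.
have key : (forall x, opow m.+1 T x = opow m.+1 T (T (Td x))) ->
   opow m.+1 T \o Td = Td \o opow m.+1 T.
  move=> E; apply: funext => x.
  change (opow m.+1 T (Td x) = Td (opow m.+1 T x)).
  rewrite [in RHS]E.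
  have -> : opow m.+1 T (T (Td x)) = T (opow m.+1 T (Td x)) by rewrite /opow -iterSr.
  by rewrite PTn.
have addT : forall a b, T (a + b) = T a + T b.
  by move=> a b; have := (hT.1 1 a b); rewrite !scale1r.
have addTd : forall a b, Td (a + b) = Td a + Td b.
  by move=> a b; case: hTd => hb _ _ _ _; have := (hb.1 1 a b); rewrite !scale1r.
have QTn : forall y, T (Td (opow m.+1 T y)) = opow m.+1 T y.
  by move=> y; rewrite /opow iterS e1.
case: hyp => [E|[E|E]].
- apply: key => x.
  have Ex : forall y, T (Td (opow m.+1 T y + Td y)) = opow m.+1 T (T (Td y)) + Td (T (Td y)).
    by move=> y; exact: (congr1 (fun f => f y) E).
  have hQ := Ex (T (Td x)).
  rewrite addTd addT QTn !e2 ?e1 in hQ.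
  have h1 := addrI _ hQ.
  have := Ex x; rewrite addTd addT QTn !e2 h1.
  exact: addIr.
- apply: key => x.
  have Ex : forall y, T (Td (opow m.+1 T y + Ts y)) = opow m.+1 T (T (Td y)) + Ts (T (Td y)).
    by move=> y; exact: (congr1 (fun f => f y) E).
  have hQ := Ex (T (Td x)).
  rewrite addTd addT QTn !TsQ ?e1 in hQ.
  have h1 := addrI _ hQ.
  have := Ex x; rewrite addTd addT QTn !TsQ h1.
  exact: addIr.
- apply: funext => x.
  change (opow m.+1 T (Td x) = Td (opow m.+1 T x)).
  have Ex : forall y, T (opow m.+1 T (Td y)) = opow m.+1 T (Td (T y)).
    by move=> y; exact: (congr1 (fun f => f y) E).
  by rewrite -[LHS]PTn -/(opow m.+2 T (Td x)) /opow iterS Ex TnP.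
Qed.
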